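(* Let $X$ be a topological space with topology $\tau$ and let $\hat X$ denote the set $X$ with the semi-regularization topology $\hat\tau$. If $X$ is strongly $\Theta$-discrete homogeneous, then $\hat X$ is also strongly $\Theta$-discrete homogeneous.
   Context: An open set $O$ is regular open if it equals the interior of its closure. The semi-regularization $\hat\tau$ of $\tau$ is the topology on $X$ generated by the base of all regular open subsets of $(X,\tau)$; $\hat X$ is Hausdorff iff $X$ is. A subset $D$ of a space $Y$ is $\Theta$-discrete if each point $y\in Y$ has a neighbourhood whose closure contains at most one point of $D$. A Hausdorff space $Y$ is strongly $\Theta$-discrete homogeneous (s$\Theta$-DH) if for any two $\Theta$-discrete subsets $A,B$ of $Y$ and any bijection $f\colon A\to B$, $f$ extends to a homeomorphism of $Y$ onto itself. *)

(* Defs.v *)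
(* a topology on a carrier T is given as the family of its open
   sets, so that two topologies (tau and its semi-regularization) can live on
   the same carrier. *)
Set Implicit Arguments.

Definition set (T : Type) := T -> Prop.

Section Topo.
Variable T : Type.
Variable tau : set T -> Prop.

Definition is_topology : Prop :=
  tau (fun _ => True) /\
  (forall F : set T -> Prop, (forall U, F U -> tau U) ->
     tau (fun x => exists U, F U /\ U x)) /\
  (forall U V, tau U -> tau V -> tau (fun x => U x /\ V x)).

Definition interior (A : set T) : set T :=
  fun x => exists U, tau U /\ U x /\ (forall y, U y -> A y).

Definition closure (A : set T) : set T :=
  fun x => forall U, tau U -> U x -> exists y, U y /\ A y.

Definition regular_open (O : set T) : Prop :=
  tau O /\ (forall x, O x <-> interior (closure O) x).

Definition nbhd (y : T) (N : set T) : Prop :=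
  exists U, tau U /\ U y /\ (forall z, U z -> N z).

Definition hausdorff : Prop :=
  forall x y, x <> y -> exists U V, tau U /\ tau V /\ U x /\ V y /\
    (forall z, ~ (U z /\ V z)).

Definition theta_discrete (D : set T) : Prop :=
  forall y, exists N, nbhd y N /\
    (forall a b, D a -> D b -> closure N a -> closure N b -> a = b).

Definition continuous (h : T -> T) : Prop :=
  forall U, tau U -> tau (fun x => U (h x)).

Definition homeomorphism (h : T -> T) : Prop :=
  exists g : T -> T, (forall x, g (h x) = x) /\ (forall y, h (g y) = y) /\
    continuous h /\ continuous g.

Definition bij_on (f : T -> T) (A B : set T) : Prop :=
  (forall x, A x -> B (f x)) /\
  (forall x y, A x -> A y -> f x = f y -> x = y) /\
  (forall y, B y -> exists x, A x /\ f x = y).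

Definition strongly_theta_DH : Prop :=
  hausdorff /\
  forall (A B : set T) (f : T -> T), theta_discrete A -> theta_discrete B ->
    bij_on f A B ->
    exists h, homeomorphism h /\ (forall x, A x -> h x = f x).
End Topo.

Definition semireg (T : Type) (tau : set T -> Prop) : set T -> Prop :=
  fun U => forall x, U x -> exists R, regular_open tau R /\ R x /\
                                      (forall y, R y -> U y).

(* Main.v *)
Require Import Defs.
From Stdlib Require Import FunctionalExtensionality PropExtensionality.

Section S.
Variable T : Type.
Variable tau : set T -> Prop.
Hypothesis top : is_topology tau.

Lemma tau_ext (A B : set T) : (forall x, A x <-> B x) -> tau A -> tau B.
Proof.
  intros H HA. replace B with A; auto.
  apply functional_extensionality; intro x; apply propositional_extensionality; auto.
Qed.

Lemma int_open (A : set T) : tau (interior tau A).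
Proof.
  destruct top as [_ [Hu _]].
  apply tau_ext with (A := fun x => exists U, (tau U /\ forall y, U y -> A y) /\ U x).
  - intro x; split.
    + intros [U [[H1 H2] H3]]. exists U; auto.
    + intros [U [H1 [H2 H3]]]. exists U; auto.
  - apply Hu. intros U [H _]; auto.
Qed.

Lemma int_mono (A B : set T) : (forall x, A x -> B x) ->
  forall x, interior tau A x -> interior tau B x.
Proof.
  intros H x [U [H1 [H2 H3]]]. exists U; auto.
Qed.

Lemma cl_sub (A B : set T) : (forall x, A x -> closure tau B x) ->
  forall x, closure tau A x -> closure tau B x.
Proof.
  intros H x Hx U HU Ux. destruct (Hx U HU Ux) as [y [Uy Ay]].
  exact (H y Ay U HU Uy).
Qed.

Lemma intcl_reg (U : set T) : tau U -> regular_open tau (interior tau (closure tau U)).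
Proof.
  intro HU. split; [apply int_open|]. intro x; split.
  - intro Hx. exists (interior tau (closure tau U)). split; [apply int_open|].
    split; auto. intros y Hy U' HU' U'y. exists y; auto.
  - apply int_mono. apply cl_sub. intros y [W [_ [Wy Hw]]]. auto.
Qed.

Lemma sub_intcl (U : set T) : tau U -> forall x, U x -> interior tau (closure tau U) x.
Proof.
  intros HU x Ux. exists U. split; auto. split; auto.
  intros y Uy V _ Vy. exists y; auto.
Qed.

Lemma reg_semi (R : set T) : regular_open tau R -> semireg tau R.
Proof. intros HR x Rx. exists R; auto. Qed.

Lemma haus_semi : hausdorff tau -> hausdorff (semireg tau).
Proof.
  intros H x y Hxy. destruct (H x y Hxy) as [U [V [HU [HV [Ux [Vy Hd]]]]]].
  exists (interior tau (closure tau U)), (interior tau (closure tau V)).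
  split; [apply reg_semi, intcl_reg; auto|].
  split; [apply reg_semi, intcl_reg; auto|].
  split; [apply sub_intcl; auto|].
  split; [apply sub_intcl; auto|].
  intros z [[W1 [HW1 [W1z H1]]] [W2 [HW2 [W2z H2]]]].
  destruct (H1 z W1z W2 HW2 W2z) as [w [W2w Uw]].
  destruct (H2 w W2w U HU Uw) as [v [Uv Vv]].
  apply (Hd v); auto.
Qed.

Lemma theta_semi (D : set T) : theta_discrete (semireg tau) D -> theta_discrete tau D.
Proof.
  intros H y. destruct (H y) as [N [[W [HW [Wy HWN]]] Hd]].
  exists N. split.
  - destruct (HW y Wy) as [R [[HR _] [Ry HRW]]]. exists R; auto.
  - intros a b Da Db Ca Cb. apply (Hd a b Da Db).
    + intros V HV Va. destruct (HV a Va) as [R [[HR _] [Ra HRV]]].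
      destruct (Ca R HR Ra) as [z [Rz Nz]]. exists z; auto.
    + intros V HV Va. destruct (HV b Va) as [R [[HR _] [Ra HRV]]].
      destruct (Cb R HR Ra) as [z [Rz Nz]]. exists z; auto.
Qed.

Lemma cont_semi (h g : T -> T) : (forall x, g (h x) = x) -> (forall y, h (g y) = y) ->
  continuous tau h -> continuous tau g -> continuous (semireg tau) h.
Proof.
  intros gh hg ch cg U HU x Ux.
  destruct (HU (h x) Ux) as [R [[HR HRr] [Rx HRU]]].
  exists (fun z => R (h z)). split; [|split; auto].
  assert (clP : forall (S : set T) z, closure tau (fun w => S (h w)) z <-> closure tau S (h z)).
  { intros S z; split.
    - intros Hc V HV Vz. destruct (Hc (fun w => V (h w)) (ch V HV) Vz) as [w [Vw Sw]].
      exists (h w); auto.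
    - intros Hc V HV Vz. assert (HV' : tau (fun w => V (g w))) by (apply cg; auto).
      assert (Vg : V (g (h z))) by (rewrite gh; auto).
      destruct (Hc _ HV' Vg) as [w [Vw Sw]]. exists (g w). rewrite hg; auto. }
  assert (intP : forall (S : set T) z, interior tau (fun w => S (h w)) z <-> interior tau S (h z)).
  { intros S z; split.
    - intros [V [HV [Vz HVS]]]. exists (fun w => V (g w)). split; [apply cg; auto|].
      split; [rewrite gh; auto|]. intros w Vw. rewrite <- (hg w). auto.
    - intros [V [HV [Vz HVS]]]. exists (fun w => V (h w)). split; [apply ch; auto|].
      split; auto. }
  split; [apply ch; auto|]. intro z. split.
  - intro Rz. assert (Hi : interior tau (closure tau R) (h z)) by (apply HRr; auto).
    apply intP in Hi. revert Hi. apply int_mono. intros w Hw. apply clP; auto.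
  - intro Hz. apply HRr. apply intP. revert Hz. apply int_mono. intros w Hw. apply clP; auto.
Qed.

End S.

Theorem mainTheorem15 (T : Type) (tau : set T -> Prop) :
  is_topology tau -> strongly_theta_DH tau -> strongly_theta_DH (semireg tau).
Proof.
  intros top [Hh Hs]. split; [apply haus_semi; auto|].
  intros A B f HA HB Hf.
  destruct (Hs A B f (theta_semi _ _ _ HA) (theta_semi _ _ _ HB) Hf) as [h [[g [gh [hg [ch cg]]]] Hext]].
  exists h. split; auto. exists g. split; auto. split; auto.
  split; [apply (cont_semi _ _ _ _ gh hg ch cg)|apply (cont_semi _ _ _ _ hg gh cg ch)].
Qed.
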